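(* Let $D$ be an integral domain. Then $D[X]_A$ satisfies the ascending chain condition on associated prime ideals if and only if $D$ satisfies the ascending chain condition on associated prime ideals.
   Context: $X$ is an indeterminate over $D$, $A=\{f\in D[X]\mid f(0)=1\}$, and $D[X]_A$ is the localization at $A$. For an integral domain $E$, a prime ideal $P$ of $E$ is an associated prime ideal of $E$ if there exist $a\in E$ and $b\in E\setminus aE$ such that $P$ is minimal over $(aE:bE)=\{x\in E\mid xb\in aE\}$. $E$ satisfies the ascending chain condition on associated prime ideals if every ascending chain of associated prime ideals of $E$ is stationary. *)

(* Defs.v *)
From HB Require Import structures.
From mathcomp Require Import all_boot all_order all_algebra fraction.
Set Implicit Arguments. Unset Strict Implicit. Unset Printing Implicit Defensive.
Import GRing.Theory.
Local Open Scope ring_scope.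

(* An integral domain E is represented as a subring S of an integral domain R
   (given by a predicate S : R -> Prop).  Ideals of E are predicates on R
   contained in S. *)
Section AssocPrimes.
Variables (R : idomainType) (S : R -> Prop).

Definition is_ideal (I : R -> Prop) : Prop :=
  [/\ forall x, I x -> S x,
      I 0,
      forall x y, I x -> I y -> I (x + y) &
      forall r x, S r -> I x -> I (r * x)].

Definition is_prime_ideal (P : R -> Prop) : Prop :=
  [/\ is_ideal P, ~ P 1 &
      forall x y, S x -> S y -> P (x * y) -> P x \/ P y].

(* (aE : bE) = { x in E | x b in aE } *)
Definition colon (a b : R) : R -> Prop :=
  fun x => S x /\ exists2 y, S y & x * b = a * y.

Definition minimal_prime_over (I P : R -> Prop) : Prop :=
  [/\ is_prime_ideal P, (forall x, I x -> P x) &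
      forall Q, is_prime_ideal Q -> (forall x, I x -> Q x) ->
        (forall x, Q x -> P x) -> forall x, P x -> Q x].

Definition is_assoc_prime (P : R -> Prop) : Prop :=
  exists a b, [/\ S a, S b, ~ (exists2 y, S y & b = a * y) &
                  minimal_prime_over (colon a b) P].

Definition acc_assoc_primes : Prop :=
  forall P : nat -> R -> Prop,
    (forall n, is_assoc_prime (P n)) ->
    (forall n x, P n x -> P n.+1 x) ->
    exists N, forall n, (N <= n)%N -> forall x, P n x <-> P N x.

End AssocPrimes.

(* D[X]_A, A = {f in D[X] | f(0) = 1}, realized inside the fraction field of D[X]. *)
Definition locA (D : idomainType) : {fraction {poly D}} -> Prop :=
  fun z => exists f g : {poly D}, g.[0] = 1 /\ z = tofrac f / tofrac g.
Arguments locA D : clear implicits.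

(* Main.v *)
Require Import Defs.
From mathcomp Require Import all_boot all_order all_algebra fraction.
From Stdlib Require Import Classical.
From mathcomp Require Import zify ring.
Set Implicit Arguments. Unset Strict Implicit. Unset Printing Implicit Defensive.
Import GRing.Theory.
Local Open Scope ring_scope.

Module ZZ.
From mathcomp Require Import boolp classical_sets.
Local Open Scope classical_set_scope.
Lemma myzorn (T : Type) (P : (T -> Prop) -> Prop) :
  (forall F : (T -> Prop) -> Prop, (forall X, F X -> P X) ->
     (forall X Y, F X -> F Y -> (forall z, X z -> Y z) \/ (forall z, Y z -> X z)) ->
     P (fun z => exists2 X, F X & X z)) ->
  exists A, P A /\ forall B, (forall z, A z -> B z) -> (exists z, B z /\ ~ A z) -> ~ P B.
Proof.
move=> H.
have HZ : (forall F : set (set T), F `<=` P -> total_on F subset ->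
      P (\bigcup_(X in F) X)).
  move=> F FP Ftot; apply: H.
    by move=> X FX; apply: FP.
  by move=> X Y FX FY; case: (Ftot X Y FX FY) => h; [left|right] => z; apply: h.
have := @Zorn_bigcup T P HZ; case=> A [PA Amax].
exists A; split => // B AB [z [Bz nAz]] PB; apply: (Amax B) => //.
split; first by move=> w; apply: AB.
by move=> BA; apply: nAz; apply: BA.
Qed.
End ZZ.

Lemma ex_min (P : nat -> Prop) : (exists n, P n) ->
  exists n, P n /\ forall m, P m -> (n <= m)%N.
Proof.
case=> n Pn; elim: n {-2}n (leqnn n) Pn => [|k IH] n Hn Pn.
  by exists n; split => // m _; move: Hn; rewrite leqn0 => /eqP ->.
case: (classic (exists m, P m /\ (m < n)%N)) => [[m [Pm ltm]]|H].
  by apply: (IH m) => //; rewrite -ltnS (leq_trans ltm Hn).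
exists n; split => // m Pm; rewrite leqNgt; apply/negP => lt; apply: H; exists m; tauto.
Qed.

Section Gen.
Variable D : idomainType.

Definition dvr (a x : D) := exists y, x = a * y.
Definition idl (P : D -> Prop) :=
  [/\ P 0, forall x y, P x -> P y -> P (x + y) & forall r x, P x -> P (r * x)].

Lemma dvr_idl a : idl (dvr a).
Proof.
split; first by exists 0; rewrite mulr0.
  by move=> x y [u ->] [v ->]; exists (u + v); rewrite mulrDr.
by move=> r x [u ->]; exists (r * u); rewrite mulrCA.
Qed.

Lemma prime_idl p : is_prime_ideal (fun _ : D => True) p -> idl p.
Proof. by case=> [[_ H0 HD HM] _ _]; split => // r x; apply: HM. Qed.

Lemma idlN P x : idl P -> P x -> P (- x).
Proof. by case=> _ _ HM Px; rewrite -mulN1r; apply: HM. Qed.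

Lemma idlB P x y : idl P -> P x -> P y -> P (x - y).
Proof. by move=> hP Px Py; case: (hP) => _ HD _; apply: HD => //; apply: idlN. Qed.

Lemma sum_idl P n (F : 'I_n -> D) : idl P -> (forall i, P (F i)) -> P (\sum_(i < n) F i).
Proof.
move=> [H0 HD _] HF; elim/big_ind: _ => //.
Qed.

Lemma sum_idl1 P n (F : 'I_n -> D) (i : 'I_n) : idl P ->
  (forall k : 'I_n, k != i -> P (F k)) -> P (\sum_(k < n) F k) -> P (F i).
Proof.
move=> hP HF Hs; rewrite (bigD1 i) //= in Hs.
have Hr : P (\sum_(k < n | k != i) F k).
  case: hP => H0 HD _; elim/big_ind: _ => //.
have := idlB hP Hs Hr; by rewrite addrK.
Qed.

Definition PX (p : D -> Prop) (f : {poly D}) := forall i, p f`_i.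

Lemma PX_prime p f g : is_prime_ideal (fun _ : D => True) p ->
  PX p (f * g) -> PX p f \/ PX p g.
Proof.
move=> hp Hfg; have hP := prime_idl hp.
case: (classic (PX p f)) => Hf; [by left|].
case: (classic (PX p g)) => Hg; [by right|].
exfalso.
have [i [Hi imin]] := ex_min (not_all_ex_not _ _ Hf).
have [j [Hj jmin]] := ex_min (not_all_ex_not _ _ Hg).
have Hc := Hfg (i + j)%N; rewrite coefM in Hc.
have lt : (i < (i + j).+1)%N by rewrite ltnS leq_addr.
have := sum_idl1 (i:=Ordinal lt) hP _ Hc.
case: hp => [[_ _ _ HM] _ Hpr].
have : p (f`_i * g`_(i + j - i)) -> False.
  by rewrite addKn => /Hpr [] // _ _.
move=> Hne H; apply: Hne; apply: H => k; rewrite -val_eqE /= => hk.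
case: (ltngtP k i) hk => // hki _.
  have : p f`_k by case: (classic (p f`_k)) => // /imin; rewrite leqNgt hki.
  by move=> pk; rewrite mulrC; apply: HM.
have : p g`_(i + j - k).
  case: (classic (p g`_(i + j - k))) => // /jmin; rewrite leqNgt.
  have kb := ltn_ord k; rewrite ltn_subLR; last by rewrite -ltnS.
  by rewrite ltn_add2r hki.
by move=> pk; apply: HM.
Qed.


Lemma dvr0 a : dvr a 0. Proof. by case: (dvr_idl a). Qed.
Lemma dvrM a r x : dvr a x -> dvr a (r * x).
Proof. by case: (dvr_idl a) => _ _; apply. Qed.

Lemma mccoy p a (f : {poly D}) j : is_prime_ideal (fun _ : D => True) p -> ~ p f`_j ->
  forall g : {poly D}, (forall k, dvr a (f * g)`_k) -> exists s, ~ p s /\ forall k, dvr a (s * g`_k).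
Proof.
move=> hp pj.
have Hpr : forall x y, p (x * y) -> p x \/ p y.
  by case: hp => _ _ H x y; apply: H.
suff H : forall n (g : {poly D}), (forall k, (n <= k)%N -> dvr a g`_k) ->
    (forall k, dvr a (f * g)`_k) -> exists s, ~ p s /\ forall k, dvr a (s * g`_k).
  move=> g; apply: (H (size g)) => k hk; rewrite nth_default //; exact: dvr0.
elim=> [|n IHn] g Hg Hfg.
  by exists 1; split; [case: hp|move=> k; rewrite mul1r; apply: Hg].
suff C : forall i s0, ~ p s0 -> (forall k, (i <= k)%N -> forall l,
    dvr a (f`_k * s0 * g`_l)) -> exists s, ~ p s /\ forall k, dvr a (s * g`_k).
  apply: (C (size f) 1); first by case: hp.
  by move=> k hk l; rewrite nth_default // !mul0r; apply: dvr0.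
elim=> [|i IHi] s0 ps0 Hs0.
  exists (f`_j * s0); split; first by case/Hpr.
  by move=> k; apply: Hs0.
pose g' := (f`_i * s0) *: g.
have Hfg' : forall k, dvr a (f * g')`_k.
  by move=> k; rewrite /g' -scalerAr coefZ; apply: dvrM.
have Hg' : forall k, (n <= k)%N -> dvr a g'`_k.
  move=> k; rewrite leq_eqVlt => /orP [/eqP <-|hk]; last first.
    by rewrite /g' coefZ; apply: dvrM; apply: Hg.
  rewrite /g' coefZ.
  have Hc := dvrM s0 (Hfg (i + n)%N); rewrite coefM mulr_sumr in Hc.
  have lt : (i < (i + n).+1)%N by rewrite ltnS leq_addr.
  have key : dvr a (s0 * (f`_i * g`_(i + n - i))).
    apply: (sum_idl1 (i:=Ordinal lt) (F := fun m : 'I_(i+n).+1 => s0 * (f`_m * g`_(i + n - m)))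
      (dvr_idl a) _ Hc) => m; rewrite -val_eqE /= => hm.
    case: (ltngtP m i) hm => // hmi _.
      rewrite mulrA; apply: dvrM; apply: Hg.
      have mb := ltn_ord m; rewrite ltn_subRL -ltn_subRL.
      lia.
    by rewrite mulrA (mulrC s0); apply: Hs0.
  by move: key; rewrite addKn mulrA (mulrC s0).
have [s1 [ps1 Hs1]] := IHn g' Hg' Hfg'.
apply: (IHi (s1 * s0)); first by case/Hpr.
move=> k; rewrite leq_eqVlt => /orP [/eqP <-|hk] l.
  have := Hs1 l; rewrite /g' coefZ.
  suff -> : f`_i * (s1 * s0) * g`_l = s1 * (f`_i * s0 * g`_l) by [].
  by ring.
suff -> : f`_k * (s1 * s0) * g`_l = s1 * (f`_k * s0 * g`_l).
  by apply: dvrM; apply: Hs0.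
by ring.
Qed.

End Gen.

Section Gen2.
Variable D : idomainType.

Lemma dvr_unit a (f g : {poly D}) : g`_0 = 1 ->
  (forall k, dvr a (f * g)`_k) -> forall k, dvr a f`_k.
Proof.
move=> g0 H.
suff : forall n k, (k <= n)%N -> dvr a f`_k by move=> S k; apply: (S k).
elim=> [|n IH] k hk.
  move: hk; rewrite leqn0 => /eqP ->; have := H 0%N.
  by rewrite coefM big_ord1 subnn g0 mulr1.
move: hk; rewrite leq_eqVlt => /orP [/eqP ->|hk]; last by apply: IH.
have := H n.+1; rewrite coefM => Hs.
have := sum_idl1 (i := ord_max) (dvr_idl a) _ Hs.
rewrite /= subnn g0 mulr1; apply => m; rewrite -val_eqE /= => hm.
rewrite mulrC; apply: dvrM; apply: IH.
by have := ltn_ord m; rewrite ltnS leq_eqVlt (negPf hm).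
Qed.

Lemma dvrP a (p : {poly D}) : (forall k, dvr a p`_k) -> exists w, p = a%:P * w.
Proof.
elim/poly_ind: p => [|q c IH] H.
  by exists 0; rewrite mulr0.
have [w ew] : exists w, q = a%:P * w.
  by apply: IH => k; have := H k.+1; rewrite coefD coefMX coefC /= addr0.
have [y ey] : dvr a c by have := H 0%N; rewrite coefD coefMX coefC /= add0r.
by exists (w * 'X + y%:P); rewrite ew ey mulrDr mulrA polyCM.
Qed.

End Gen2.

Section E.
Variable D : idomainType.
Local Notation K := {fraction {poly D}}.
Local Notation tf := (@tofrac {poly D}).
Definition cst (c : D) : K := tf c%:P.
Local Notation E := (locA D).

Lemma tfD f g : tf (f + g) = tf f + tf g. Proof. exact: tofracD. Qed.
Lemma tfM f g : tf (f * g) = tf f * tf g. Proof. exact: tofracM. Qed.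
Lemma tf1 : tf 1 = 1. Proof. exact: tofrac1. Qed.
Lemma tf0 : tf 0 = 0. Proof. exact: tofrac0. Qed.
Lemma tf_inj f g : tf f = tf g -> f = g.
Proof. by move=> h; apply/eqP; rewrite -tofrac_eq; apply/eqP. Qed.

Lemma tf_neq0 (g : {poly D}) : g.[0] = 1 -> tf g != 0.
Proof.
move=> h; rewrite /tf tofrac_eq0; apply/eqP => g0; move: h; rewrite g0 horner0.
by move/eqP; rewrite eq_sym oner_eq0.
Qed.


Lemma tfN f : tf (- f) = - tf f. Proof. exact: tofracN. Qed.

Lemma one0 : (1 : {poly D}).[0] = 1. Proof. by rewrite hornerC. Qed.

Lemma E_frac f g : g.[0] = 1 -> E (tf f / tf g). Proof. by move=> h; exists f, g. Qed.
Lemma E_tf f : E (tf f). Proof. by exists f, 1; rewrite one0 tf1 divr1. Qed.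
Lemma E_cst c : E (cst c). Proof. exact: E_tf. Qed.
Lemma E1 : E 1. Proof. by rewrite -tf1; apply: E_tf. Qed.
Lemma E0 : E 0. Proof. by rewrite -tf0; apply: E_tf. Qed.
Lemma E_inv g : g.[0] = 1 -> E (tf g)^-1.
Proof. by move=> h; exists 1, g; rewrite tf1 mul1r. Qed.

Lemma E_add x y : E x -> E y -> E (x + y).
Proof.
move=> [f1 [g1 [h1 ->]]] [f2 [g2 [h2 ->]]].
exists (f1 * g2 + f2 * g1), (g1 * g2); split; first by rewrite hornerM h1 h2 mulr1.
by rewrite addf_div ?tf_neq0 // tfD !tfM.
Qed.
Lemma E_mul x y : E x -> E y -> E (x * y).
Proof.
move=> [f1 [g1 [h1 ->]]] [f2 [g2 [h2 ->]]].
exists (f1 * f2), (g1 * g2); split; first by rewrite hornerM h1 h2 mulr1.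
by rewrite mulf_div !tfM.
Qed.
Lemma E_opp x : E x -> E (- x).
Proof.
move=> [f1 [g1 [h1 ->]]]; exists (- f1), g1; split => //.
by rewrite tfN mulNr.
Qed.
Lemma E_exp x n : E x -> E (x ^+ n).
Proof. by move=> Ex; elim: n => [|n IH]; [rewrite expr0; apply: E1|rewrite exprS; apply: E_mul]. Qed.

Lemma cstD a b : cst (a + b) = cst a + cst b. Proof. by rewrite /cst polyCD tfD. Qed.
Lemma cstM a b : cst (a * b) = cst a * cst b. Proof. by rewrite /cst polyCM tfM. Qed.
Lemma cstN a : cst (- a) = - cst a. Proof. by rewrite /cst polyCN tfN. Qed.
Lemma cst1 : cst 1 = 1. Proof. by rewrite /cst tf1. Qed.
Lemma cst0 : cst 0 = 0. Proof. by rewrite /cst tf0. Qed.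
Lemma cstX a n : cst (a ^+ n) = cst a ^+ n.
Proof. by elim: n => [|n IH]; rewrite ?expr0 ?cst1 // !exprS cstM IH. Qed.
Lemma cst_inj a b : cst a = cst b -> a = b.
Proof. by move/tf_inj/polyC_inj. Qed.

Lemma id_num Q f g : is_ideal E Q -> g.[0] = 1 -> Q (tf f / tf g) -> Q (tf f).
Proof.
move=> [_ _ _ HM] h Hq; have := HM _ _ (E_tf g) Hq.
by rewrite mulrC divfK // tf_neq0.
Qed.
Lemma id_frac Q f g : is_ideal E Q -> g.[0] = 1 -> Q (tf f) -> Q (tf f / tf g).
Proof. by move=> [_ _ _ HM] h Hq; rewrite mulrC; apply: HM => //; apply: E_inv. Qed.

Lemma frac_eq f g f' g' : g.[0] = 1 -> g'.[0] = 1 ->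
  tf f / tf g = tf f' / tf g' -> f * g' = f' * g.
Proof.
move=> h h' e; apply: tf_inj; rewrite !tfM; apply/eqP.
by rewrite -eqr_div ?tf_neq0 // e.
Qed.

Lemma PX_mul (p : D -> Prop) (f g : {poly D}) : idl p -> PX p f -> PX p (f * g).
Proof.
move=> hp Hf i; rewrite coefM; apply: sum_idl => // j.
by case: hp => _ _ HM; rewrite mulrC; apply: HM.
Qed.
Lemma PX_mulr (p : D -> Prop) (f g : {poly D}) : idl p -> PX p g -> PX p (f * g).
Proof. by move=> hp Hg; rewrite mulrC; apply: PX_mul. Qed.
Lemma PX_add (p : D -> Prop) (f g : {poly D}) : idl p -> PX p f -> PX p g -> PX p (f + g).
Proof. by move=> [_ HD _] Hf Hg i; rewrite coefD; apply: HD. Qed.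
Lemma PX0 (p : D -> Prop) : idl p -> PX p 0.
Proof. by move=> [H0 _ _] i; rewrite coef0. Qed.
Lemma PX_C (p : D -> Prop) c : idl p -> PX p c%:P <-> p c.
Proof.
move=> [H0 _ _]; split; first by move/(_ 0%N); rewrite coefC.
by move=> pc i; rewrite coefC; case: (i == 0%N).
Qed.

Definition ext (p : D -> Prop) : K -> Prop :=
  fun z => exists f g, [/\ g.[0] = 1, PX p f & z = tf f / tf g].
Definition con (Q : K -> Prop) : D -> Prop := fun c => Q (cst c).

Lemma p1 p : is_prime_ideal (fun _ : D => True) p -> ~ p 1.
Proof. by case. Qed.

Lemma PX_g0 (p : D -> Prop) (g : {poly D}) : is_prime_ideal (fun _ : D => True) p -> g.[0] = 1 -> ~ PX p g.
Proof. by move=> hp h /(_ 0%N); rewrite -horner_coef0 h; apply: p1. Qed.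

Lemma ext_num p f g : is_prime_ideal (fun _ : D => True) p -> g.[0] = 1 ->
  ext p (tf f / tf g) -> PX p f.
Proof.
move=> hp h [f' [g' [h' Pf' e]]].
have hpi := prime_idl hp.
have e2 := frac_eq h h' e.
have : PX p (f * g') by rewrite e2; apply: PX_mul.
by case/(PX_prime hp) => // /(PX_g0 hp h').
Qed.

Lemma ext_cst p c : is_prime_ideal (fun _ : D => True) p -> ext p (cst c) -> p c.
Proof.
move=> hp He; have : ext p (tf c%:P / tf 1) by rewrite tf1 divr1.
by move/(ext_num hp one0)/(PX_C _ (prime_idl hp)).
Qed.


Local Notation primeD p := (is_prime_ideal (fun _ : D => True) p).

Lemma ext_prime p : primeD p -> is_prime_ideal E (ext p).
Proof.
move=> hp; have hpi := prime_idl hp; split; first split.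
- by move=> z [f [g [h _ ->]]]; apply: E_frac.
- by exists 0, 1; rewrite one0 tf0 mul0r; split => //; apply: PX0.
- move=> x y [f1 [g1 [h1 P1 ->]]] [f2 [g2 [h2 P2 ->]]].
  exists (f1 * g2 + f2 * g1), (g1 * g2); split.
  + by rewrite hornerM h1 h2 mulr1.
  + by apply: PX_add => //; apply: PX_mul.
  + by rewrite addf_div ?tf_neq0 // tfD !tfM.
- move=> r x [f1 [g1 [h1 ->]]] [f2 [g2 [h2 P2 ->]]].
  exists (f1 * f2), (g1 * g2); split.
  + by rewrite hornerM h1 h2 mulr1.
  + by apply: PX_mulr.
  + by rewrite mulf_div !tfM.
- have : ext p (tf 1 / tf 1) -> False.
    by move/(ext_num hp one0)/(_ 0%N); rewrite coef1; apply: p1.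
  by rewrite tf1 divr1.
- move=> x y [f1 [g1 [h1 ->]]] [f2 [g2 [h2 ->]]].
  rewrite mulf_div -!tfM => /(ext_num hp _).
  rewrite hornerM h1 h2 mulr1 => /(_ erefl) /(PX_prime hp) [Hf|Hf].
    by left; exists f1, g1.
  by right; exists f2, g2.
Qed.

Lemma ext_sub p Q : is_ideal E Q -> (forall c, p c -> Q (cst c)) ->
  forall z, ext p z -> Q z.
Proof.
move=> hQ Hc z [f [g [h Pf ->]]]; apply: id_frac => //.
case: (hQ) => _ H0 HD HM.
rewrite -[f]coefK poly_def rmorph_sum; elim/big_ind: _ => // i _.
rewrite /= -mul_polyC tfM mulrC; apply: HM; first exact: E_tf.
exact: Hc.
Qed.

Lemma con_prime Q : is_prime_ideal E Q -> primeD (con Q).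
Proof.
case=> [[_ H0 HD HM] Q1 HP]; split; first split.
- by [].
- by rewrite /con cst0.
- by move=> x y; rewrite /con cstD; apply: HD.
- by move=> r x _; rewrite /con cstM; apply: HM; apply: E_cst.
- by rewrite /con cst1.
- by move=> x y _ _; rewrite /con cstM; apply: HP; apply: E_cst.
Qed.

Lemma con_ext p c : primeD p -> con (ext p) c <-> p c.
Proof.
move=> hp; split; first exact: ext_cst.
move=> pc; exists c%:P, 1; split.
- exact: one0.
- by apply/(PX_C _ (prime_idl hp)).
- by rewrite tf1 divr1.
Qed.

Lemma colon_ideal a b : is_ideal E (colon E a b).
Proof.
split.
- by move=> x [].
- by split; [exact: E0|exists 0; [exact: E0|rewrite !mul0r mulr0]].
- move=> x y [Ex [u Eu ex]] [Ey [v Ev ey]]; split; first exact: E_add.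
  by exists (u + v); [exact: E_add|rewrite mulrDl ex ey mulrDr].
- move=> r x Er [Ex [u Eu ex]]; split; first exact: E_mul.
  by exists (r * u); [exact: E_mul|rewrite -mulrA ex mulrCA].
Qed.


Lemma zl (I Q : K -> Prop) x : is_ideal E I -> minimal_prime_over E I Q -> Q x ->
  exists t, [/\ E t, ~ Q t & exists n, I (t * x ^+ n)].
Proof.
move=> hI [hQ IQ Qmin] Qx; apply: NNPP => Hno.
have Hno' : forall t n, E t -> ~ Q t -> ~ I (t * x ^+ n).
  by move=> t n Et Qt It; apply: Hno; exists t; split => //; exists n.
have Ex : E x by case: hQ => [[HS _ _ _] _ _]; apply: HS.
pose Sm z := exists t n, [/\ E t, ~ Q t & z = t * x ^+ n].
pose Pp (J : K -> Prop) := (forall z, ~ J z) \/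
  [/\ is_ideal E J, (forall z, I z -> J z) & forall z, J z -> ~ Sm z].
have [M [PM Mmax]] : exists M, Pp M /\ forall B, (forall z, M z -> B z) ->
    (exists z, B z /\ ~ M z) -> ~ Pp B.
  apply: ZZ.myzorn => F FP Ftot.
  have RB : forall X z, F X -> X z ->
      [/\ is_ideal E X, (forall z, I z -> X z) & forall z, X z -> ~ Sm z].
    by move=> X z FX Xz; case: (FP X FX) => // /(_ z).
  case: (classic (exists X z, F X /\ X z)) => [[X0 [z0 [FX0 Xz0]]]|Hn]; last first.
    by left => z [X FX Xz]; apply: Hn; exists X, z.
  right; have [hX0 IX0 dX0] := RB _ _ FX0 Xz0; split.
  - split.
    + by move=> z [X FX Xz]; have [[HS _ _ _] _ _] := RB _ _ FX Xz; apply: HS.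
    + by exists X0 => //; case: hX0.
    + move=> u v [X FX Xu] [Y FY Yv].
      case: (Ftot X Y FX FY) => sub.
        have [[_ _ HD _] _ _] := RB _ _ FY Yv.
        by exists Y => //; apply: HD => //; apply: sub.
      have [[_ _ HD _] _ _] := RB _ _ FX Xu.
      by exists X => //; apply: HD => //; apply: sub.
    + move=> r u Er [X FX Xu]; have [[_ _ _ HM] _ _] := RB _ _ FX Xu.
      by exists X => //; apply: HM.
  - by move=> z Iz; exists X0 => //; apply: IX0.
  - by move=> z [X FX Xz]; have [_ _ ] := RB _ _ FX Xz; apply.
have [hM IM dM] : [/\ is_ideal E M, (forall z, I z -> M z) & forall z, M z -> ~ Sm z].
  case: PM => // M0; exfalso; apply: (Mmax I).
  - by move=> z /M0.
  - by exists 0; split; [case: hI|apply: M0].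
  - right; split => // z Iz [t [n [Et Qt ez]]]; apply: (Hno' t n Et Qt); by rewrite -ez.
have Q1 : ~ Q 1 by case: hQ.
have QP : forall u v, E u -> E v -> Q (u * v) -> Q u \/ Q v by case: hQ.
have SmM : forall a b, Sm a -> Sm b -> Sm (a * b).
  move=> a b [t1 [n1 [E1' Q1' ->]]] [t2 [n2 [E2' Q2' ->]]].
  exists (t1 * t2), (n1 + n2)%N; split; first exact: E_mul.
    by case/QP.
  by rewrite exprD mulrACA.
have MQ : forall z, M z -> Q z.
  move=> z Mz; apply: NNPP => nQ; apply: (dM z Mz); exists z, 0%N; split => //.
    by case: hM => HS _ _ _; apply: HS.
  by rewrite expr0 mulr1.
have meet : forall w, E w -> ~ M w -> exists m e, [/\ M m, E e & Sm (m + e * w)].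
  move=> w Ew nMw; case: hM => HS H0 HD HM.
  pose Mw z := exists m e, [/\ M m, E e & z = m + e * w].
  have : ~ Pp Mw.
    apply: Mmax.
      by move=> z Mz; exists z, 0; split => //; [exact: E0|rewrite mul0r addr0].
    exists w; split => //; exists 0, 1; split => //; first exact: E1.
    by rewrite add0r mul1r.
  move=> nP; apply: NNPP => nE; apply: nP; right; split.
  - split.
    + by move=> z [m [e [Mm Ee ->]]]; apply: E_add; [apply: HS|apply: E_mul].
    + by exists 0, 0; split => //; [exact: E0|rewrite mul0r addr0].
    + move=> z1 z2 [m1 [e1 [M1 E1' ->]]] [m2 [e2 [M2 E2' ->]]].
      exists (m1 + m2), (e1 + e2); split; [exact: HD|exact: E_add|].
      by rewrite mulrDl addrACA.
    + move=> r z Er [m [e [Mm Ee ->]]]; exists (r * m), (r * e); split.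
      * exact: HM.
      * exact: E_mul.
      * by rewrite mulrDr mulrA.
  - by move=> z Iz; exists z, 0; split; [exact: IM|exact: E0|rewrite mul0r addr0].
  - move=> z [m [e [Mm Ee ->]]] Sz; apply: nE; exists m, e; split => //.
have hMp : is_prime_ideal E M.
  split => //.
    by move=> M1; apply: (dM 1 M1); exists 1, 0%N; split => //; [exact: E1|rewrite mul1r].
  move=> u v Eu Ev Muv; apply: NNPP => nuv.
  have nu : ~ M u by move=> Mu; apply: nuv; left.
  have nv : ~ M v by move=> Mv; apply: nuv; right.
  have [m1 [e1 [M1 E1' S1]]] := meet u Eu nu.
  have [m2 [e2 [M2 E2' S2]]] := meet v Ev nv.
  apply: (dM _ _ (SmM _ _ S1 S2)).
  case: hM => HS H0 HD HM.
  have -> : (m1 + e1 * u) * (m2 + e2 * v) =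
    m1 * (m2 + e2 * v) + (e1 * u) * m2 + (e1 * e2) * (u * v).
    by rewrite mulrDl [X in _ + X]mulrDr addrA mulrACA.
  apply: (HD); first apply: (HD).
  - by rewrite mulrC; apply: HM => //; apply: E_add; [apply: HS|apply: E_mul].
  - by apply: HM => //; apply: E_mul.
  - by apply: HM => //; apply: E_mul.
have Mx : M x by apply: (Qmin M hMp IM MQ).
by apply: (dM x Mx); exists 1, 1%N; split => //; [exact: E1|rewrite mul1r expr1].
Qed.


Lemma coef_Ca (a : D) (u : {poly D}) k : dvr a (a%:P * u)`_k.
Proof. by rewrite coefCM; exists u`_k. Qed.

Lemma assoc2 Q : is_assoc_prime E Q ->
  is_assoc_prime (fun _ : D => True) (con Q) /\
  ((exists c, c != 0 /\ con Q c) -> forall z, Q z <-> ext (con Q) z).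
Proof.
move=> [A0 [B0 [EA EB nB hmin]]].
have [hQ IQ Qmin] := hmin.
have hq := con_prime hQ.
have hqi := prime_idl hq.
have [[QS Q0 QD QM] Q1 QP] := hQ.
case: (classic (exists c, c != 0 /\ con Q c)) => [[c [c0 Qc]]|Hn]; last first.
  have Hz : forall c, con Q c -> c = 0.
    by move=> c Qc; apply: NNPP => c0; apply: Hn; exists c; split => //; apply/eqP.
  split => //; exists 0, 1; split => //.
    by case => y _; rewrite mul0r => /eqP; rewrite oner_eq0.
  split => //.
    by move=> x [_ [y _]]; rewrite mulr1 mul0r => ->; rewrite /con cst0.
  move=> Q'' hQ'' _ _ x /Hz ->; by case: hQ'' => [[]].
have [t [Et Qt [n It]]] := zl (colon_ideal A0 B0) hmin Qc.
rewrite -cstX in It; set a := c ^+ n in It.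
have a0 : a != 0 by rewrite expf_neq0.
have ca0 : cst a != 0.
  apply/eqP => e; move/negP: a0; apply; apply/eqP; apply: cst_inj; by rewrite e cst0.
case: It => _ [y0 Ey0 ey0].
have [h [s [hs ey]]] := Ey0.
have A00 : A0 != 0.
  apply/eqP => A00; move: ey0; rewrite A00 mul0r => /eqP; rewrite !mulf_eq0 (negPf ca0) orbF.
  case/orP => /eqP e0.
    by apply: Qt; rewrite e0.
  by apply: nB; exists 0; [exact: E0|rewrite e0 A00 mul0r].
have S1 : forall x, colon E A0 B0 x -> exists2 w, E w & x * y0 = cst a * w.
  move=> x [Ex [y Ey exy]]; exists (t * y); first exact: E_mul.
  apply: (mulfI A00).
  have -> : A0 * (x * y0) = x * (A0 * y0) by ring.
  rewrite -ey0.
  have -> : x * (t * cst a * B0) = t * cst a * (x * B0) by ring.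
  rewrite exy; ring.
have S2 : forall f g w, g.[0] = 1 -> E w -> tf f / tf g * y0 = cst a * w ->
    forall k, dvr a (f * h)`_k.
  move=> f g w hg [u [v [hv ->]]]; rewrite ey mulf_div mulrA /cst -!tfM => e.
  have e2 := frac_eq (g := g * s) _ hv e.
  rewrite hornerM hg hs mulr1 in e2; have {}e2 := e2 erefl.
  apply: (dvr_unit (g := v)); first by rewrite -horner_coef0.
  by move=> k; rewrite e2 -mulrA; apply: coef_Ca.
have S3 : forall c', (forall k, dvr a (c' * h`_k)) -> con Q c'.
  move=> c' Hc'.
  have [w0 ew0] : exists w0, c'%:P * h = a%:P * w0.
    by apply: dvrP => k; rewrite coefCM.
  have Ect : colon E A0 B0 (cst c' * t).
    split; first by apply: E_mul => //; apply: E_cst.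
    exists (tf w0 / tf s); first exact: E_frac.
    apply: (mulIf ca0).
    have -> : cst c' * t * B0 * cst a = cst c' * (t * cst a * B0) by ring.
    rewrite ey0 ey.
    have -> : cst c' * (A0 * (tf h / tf s)) = A0 * ((cst c' * tf h) / tf s) by ring.
    rewrite /cst -tfM ew0 tfM; ring.
  by case: (QP _ _ (E_cst c') Et (IQ _ Ect)).
have [i [nbi Hbi]] : exists i, ~ dvr a h`_i /\ forall c', dvr a (c' * h`_i) -> con Q c'.
  apply: NNPP => Hno.
  suff : forall m, exists c', ~ con Q c' /\ forall i, (i < m)%N -> dvr a (c' * h`_i).
    case/(_ (size h)) => c' [nQ Hc']; apply: nQ; apply: S3 => k.
    case: (ltnP k (size h)) => hk; first exact: Hc'.
    by rewrite nth_default // mulr0; apply: dvr0.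
  elim=> [|m [c' [nQ Hc']]]; first by exists 1; split => //; rewrite /con cst1.
  case: (classic (dvr a h`_m)) => hm.
    exists c'; split => // k; rewrite ltnS leq_eqVlt => /orP [/eqP ->|hk].
      by apply: dvrM.
    exact: Hc'.
  have [cm [Hcm nQm]] : exists cm, dvr a (cm * h`_m) /\ ~ con Q cm.
    apply: NNPP => H1; apply: Hno; exists m; split => // c'' Hc''.
    by apply: NNPP => H2; apply: H1; exists c''.
  exists (c' * cm); split.
    by case: hq => _ _ Hp /Hp [] // _ _.
  move=> k; rewrite ltnS leq_eqVlt => /orP [/eqP ->|hk].
    by rewrite -mulrA; apply: dvrM.
  by rewrite -mulrA mulrCA; apply: dvrM; apply: Hc'.
set b := h`_i in nbi Hbi.
have crux : forall p, primeD p -> (forall c', dvr a (c' * b) -> p c') ->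
    forall x, colon E A0 B0 x -> ext p x.
  move=> p hp Hp x Cx.
  have [w Ew exw] := S1 x Cx.
  have [f [g [hg ex]]] : E x by case: Cx.
  rewrite ex in exw; have Hfh := S2 f g w hg Ew exw.
  case: (classic (PX p f)) => Pf; first by exists f, g.
  have [j nj] := not_all_ex_not _ _ Pf.
  have [s0 [ps0 Hs0]] := mccoy hp nj Hfh.
  by exfalso; apply: ps0; apply: Hp; apply: Hs0.
have Qext : forall z, Q z <-> ext (con Q) z.
  have sub : forall z, ext (con Q) z -> Q z by apply: ext_sub.
  move=> z; split; last exact: sub.
  apply: (Qmin _ (ext_prime hq)) => //.
  by apply: crux.
split => //; exists a, b; split => //.
  by case => y _ e; apply: nbi; exists y.
split => //.
  by move=> x [_ [y _ e]]; apply: Hbi; exists y.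
move=> Q'' hQ'' HQ'' Q''q x qx.
have sub'' : forall z, ext Q'' z -> Q z.
  by apply: ext_sub => // c' /Q''q.
have : forall z, Q z -> ext Q'' z.
  apply: (Qmin _ (ext_prime hQ'')) => //.
  apply: crux => // c' [y e]; apply: HQ''; split => //; exists y => //.
by move/(_ _ qx)/(ext_cst hQ'').
Qed.


Lemma ho Q Q' : is_prime_ideal E Q -> is_prime_ideal E Q' ->
  (forall z, Q z -> Q' z) -> (exists z, Q z /\ z != 0) ->
  (forall c, con Q' c -> c = 0) -> forall z, Q' z -> Q z.
Proof.
move=> hQ hQ' QQ' [z0 [Qz0 z00]] H0.
have [[QS Q0 QD QM] Q1 QP] := hQ.
have [[QS' Q0' QD' QM'] Q1' QP'] := hQ'.
have hQi : is_ideal E Q by case: hQ.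
have hQi' : is_ideal E Q' by case: hQ'.
have [nf [[f [f0 [sf Qf]]] fmin]] : exists n, (exists f : {poly D}, [/\ f != 0, size f = n & Q (tf f)]) /\
    forall m, (exists f : {poly D}, [/\ f != 0, size f = m & Q (tf f)]) -> (n <= m)%N.
  apply: ex_min; have [f [g [hg ez]]] := QS _ Qz0.
  exists (size f), f; split => //.
    by apply/eqP => f0; move: z00; rewrite ez f0 tf0 mul0r eqxx.
  by apply: (id_num hQi hg); rewrite -ez.
have [ng [[g [g0 [sg Qg]]] gmin]] : exists n, (exists f : {poly D}, [/\ f != 0, size f = n & Q' (tf f)]) /\
    forall m, (exists f : {poly D}, [/\ f != 0, size f = m & Q' (tf f)]) -> (n <= m)%N.
  by apply: ex_min; exists (size f), f; split => //; apply: QQ'.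
have lc0 : forall k, lead_coef g ^+ k != 0.
  by move=> k; rewrite expf_neq0 // lead_coef_eq0.
have nQc : forall k, ~ Q' (cst (lead_coef g ^+ k)).
  by move=> k /H0 /eqP; rewrite (negPf (lc0 k)).
have div : forall h, Q' (tf h) -> exists k, lead_coef g ^+ k *: h = (h %/ g) * g.
  move=> h Qh; exists (scalp h g).
  have e := Pdiv.Idomain.divp_eq h g.
  suff : h %% g = 0 by move=> r0; rewrite e r0 addr0.
  apply: NNPP => r0.
  have Qr : Q' (tf (h %% g)).
    have -> : h %% g = (lead_coef g ^+ scalp h g)%:P * h - (h %/ g) * g.
      by rewrite mul_polyC e addrC addKr.
    rewrite tfD tfN !tfM; apply: QD'; first by apply: QM' => //; apply: E_tf.
    rewrite -mulNr; apply: QM' => //; apply: E_opp; apply: E_tf.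
  have := gmin (size (h %% g)); rewrite -sg leqNgt Pdiv.Idomain.ltn_modpN0 //.
  by move/(_ (ex_intro _ _ (And3 (introN eqP r0) erefl Qr))).
have sg2 : (1 < size g)%N.
  rewrite ltnNge; apply/negP => sg1; move: Qg; rewrite [g]size1_polyC // => /H0 g00.
  by move: g0; rewrite [g]size1_polyC // g00 eqxx.
have [k ek] := div f (QQ' _ Qf).
have sc : forall k (h : {poly D}), tf (lead_coef g ^+ k *: h) = cst (lead_coef g ^+ k) * tf h.
  by move=> k' h; rewrite -mul_polyC tfM.
have Qprod : Q (tf (f %/ g) * tf g).
  by rewrite -tfM -ek sc; apply: QM => //; apply: E_cst.
case: (QP _ _ (E_tf _) (E_tf _) Qprod) => [Qu|Qgg].
    exfalso.
    have u0 : f %/ g != 0.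
      apply/eqP => u0; move: ek; rewrite u0 mul0r => /eqP; rewrite scale_poly_eq0.
      by rewrite (negPf (lc0 k)) (negPf f0).
    have := fmin (size (f %/ g)) (ex_intro _ _ (And3 u0 erefl Qu)).
    have : size (lead_coef g ^+ k *: f) = size (f %/ g * g) by rewrite ek.
    rewrite size_scale ?lc0 // size_mul // sf; move=> e1 e2.
    rewrite e1 in e2; move: e2 sg2; case: (size g) => [|[|m]] // e2 _; move: e2; rewrite addnS /=.
    move: (size (f %/ g)) => A; lia.
move=> z Qz; have [h [g' [hg' ez]]] := QS' _ Qz.
rewrite ez in Qz *; apply: id_frac => //.
have Qh := id_num hQi' hg' Qz.
have [k' ek'] := div h Qh.
have : Q (tf (h %/ g) * tf g) by apply: QM => //; apply: E_tf.
rewrite -tfM -ek' sc => /(QP _ _ (E_cst _) (E_tf _)) [/QQ' /nQc|] //.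
Qed.


Lemma assoc1 p : is_assoc_prime (fun _ : D => True) p -> is_assoc_prime E (ext p).
Proof.
move=> [a [b [_ _ nb [hp Cp pmin]]]].
have hpi := prime_idl hp.
have cstE : forall c, cst c = tf c%:P / tf 1 by move=> c; rewrite tf1 divr1.
exists (cst a), (cst b); split; [exact: E_cst|exact: E_cst| |split].
- move=> [y [u [v [hv ->]]] e]; apply: nb; exists u`_0 => //.
  move: e; rewrite cstE mulrA /cst -tfM => /(frac_eq one0 hv) e.
  have := congr1 (fun q : {poly D} => q`_0) e; rewrite /= mulr1 !coefCM -horner_coef0 hv mulr1 => ->.
  by [].
- exact: ext_prime.
- move=> x [[f [g [hg ex]]] [y [u [v [hv ey]]] e]].
  move: e; rewrite ex ey mulrAC mulrA /cst -!tfM => /(frac_eq hg hv) e.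
  have : PX p (f * v).
    move=> k; apply: Cp; split => //; exists (u * g)`_k => //.
    by have := congr1 (fun q : {poly D} => q`_k) e; rewrite /= -[a%:P * u * g]mulrA coefCM -[f * b%:P * v]mulrA [b%:P * v]mulrC mulrA coefMC => ->.
  case/(PX_prime hp) => Pf; first by exists f, g.
  by case: (PX_g0 hp hv).
- move=> Q' hQ' CQ' Q'p.
  have hq' := con_prime hQ'.
  have sub : forall c, p c -> con Q' c.
    apply: (pmin _ hq').
      move=> c [_ [y _ e]]; apply: CQ'; split; first exact: E_cst.
      by exists (cst y); [exact: E_cst|rewrite -!cstM e].
    by move=> c /Q'p /(ext_cst hp).
  have hQi' : is_ideal E Q' by case: hQ'.
  by apply: ext_sub.
Qed.

Lemma ext_mono p p' z : (forall c, p c -> p' c) -> ext p z -> ext p' z.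
Proof. by move=> H [f [g [hg Pf ez]]]; exists f, g; split => // i; apply/H. Qed.

Lemma ext_eqv p p' z : (forall c, p c <-> p' c) -> ext p z <-> ext p' z.
Proof. by move=> H; split; apply: ext_mono => c /H. Qed.

End E.

Lemma chain_mono (T : Type) (P : nat -> T -> Prop) :
  (forall n x, P n x -> P n.+1 x) -> forall m n, (m <= n)%N -> forall x, P m x -> P n x.
Proof.
move=> H m n; elim: n => [|n IH] hmn x Pm.
  by move: hmn; rewrite leqn0 => /eqP <-.
move: hmn; rewrite leq_eqVlt => /orP [/eqP <- //|]; rewrite ltnS => hmn.
by apply: H; apply: IH.
Qed.

Unset Implicit Arguments.
Theorem mainTheorem6 (D : idomainType) :
  acc_assoc_primes (locA D) <-> acc_assoc_primes (fun _ : D => True).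
Proof.
split.
- move=> HE P HP Hinc.
  have hpr : forall n, is_prime_ideal (fun _ : D => True) (P n).
    by move=> n; case: (HP n) => a [b [_ _ _ []]].
  have [N HN] := HE (fun n => ext (P n)) (fun n => assoc1 (HP n))
    (fun n x => ext_mono (Hinc n)).
  exists N => n hn c.
  rewrite -(con_ext c (hpr n)) -(con_ext c (hpr N)).
  exact: HN.
- move=> HD Q HQ Hinc.
  have hpr : forall n, is_prime_ideal (locA D) (Q n).
    by move=> n; case: (HQ n) => a [b [_ _ _ []]].
  have [N HN] := HD (fun n => con (Q n)) (fun n => (assoc2 (HQ n)).1)
    (fun n c => Hinc n (cst c)).
  case: (classic (exists c, c != 0 /\ con (Q N) c)) => [Hc|Hc].
    exists N => n hn z.
    have Hc' : exists c, c != 0 /\ con (Q n) c.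
      by case: Hc => c [c0 qc]; exists c; split => //; apply/(HN n hn).
    rewrite ((assoc2 (HQ n)).2 Hc') ((assoc2 (HQ N)).2 Hc).
    exact: ext_eqv (HN n hn).
  have Z : forall n, (N <= n)%N -> forall c, con (Q n) c -> c = 0.
    move=> n hn c /(HN n hn) qc; apply: NNPP => c0; apply: Hc; exists c; split => //.
    exact/eqP.
  case: (classic (exists m z, [/\ (N <= m)%N, Q m z & z != 0])) =>
      [[m [z [hm Qz z0]]]|Hn].
    exists m => n hn x; split; last exact: chain_mono.
    apply: (ho (hpr m) (hpr n)).
    - exact: chain_mono.
    - by exists z.
    - by apply: Z; apply: leq_trans hn.
  have Q0 : forall n, Q n 0 by move=> n; case: (hpr n) => [[]].
  exists N => n hn x; split => Qx.
    case: (eqVneq x 0) => [e|nx0]; first by rewrite e. exfalso; apply: Hn; exists n, x; split => //.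
  case: (eqVneq x 0) => [e|nx0]; first by rewrite e. exfalso; apply: Hn; exists N, x; split => //.
Qed.
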